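(* Let $\varepsilon,\delta,s>0$ with $0<4\delta s\le\varepsilon^2$. Let $\tilde u:\mathbb R\to\mathbb R$ be a smooth monotone function satisfying \[ \Big(\frac{\tilde u^2}{2}\Big)'=\varepsilon\tilde u''-\delta\tilde u''',\qquad \tilde u(x)\to \mp s,\ \ \tilde u'(x)\to0\ \text{ as }x\to\pm\infty . \] Then, with $\underline\lambda=\sqrt2-1$ and $\bar\lambda=1$, \[ \underline\lambda\,(s-\tilde u(x))(\tilde u(x)+s)\le-\varepsilon\tilde u'(x)\le\bar\lambda\,(s-\tilde u(x))(\tilde u(x)+s)\qquad\forall x\in\mathbb R . \]
   Context: Here $\tilde u$ is the (stationary, speed $\sigma=0$) viscous-dispersive shock profile of the KdV--Burgers equation $u_t+(u^2/2)_x=\varepsilon u_{xx}-\delta u_{xxx}$ connecting $u_-=s$ to $u_+=-s$. *)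

(* Defs.v *)
From Stdlib Require Import Reals.
From Coquelicot Require Import Coquelicot.
Open Scope R_scope.

Definition smooth (u : R -> R) : Prop :=
  forall (n : nat) (x : R), ex_derive (Derive_n u n) x.

Definition monotone (u : R -> R) : Prop :=
  (forall x y : R, x <= y -> u x <= u y) \/ (forall x y : R, x <= y -> u y <= u x).

(* Main.v *)
Require Import Defs.
From Stdlib Require Import Reals Lra Psatz.
From Coquelicot Require Import Coquelicot.
Open Scope R_scope.

Lemma lim_mult_fin (f g : R -> R) (x : Rbar) (a b : R) :
  is_lim f x a -> is_lim g x b -> is_lim (fun y => f y * g y) x (a * b).
Proof.
  intros Hf Hg.
  assert (H := is_lim_mult f g x a b Hf Hg).
  simpl in H. apply H. exact I.
Qed.

Lemma lim_m (f : R -> R) (l e : R) : is_lim f m_infty l -> 0 < e ->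
  exists M, forall y, y < M -> Rabs (f y - l) < e.
Proof.
  intros H He. apply is_lim_spec in H. exact (H (mkposreal e He)).
Qed.

Lemma lim_p (f : R -> R) (l e : R) : is_lim f p_infty l -> 0 < e ->
  exists M, forall y, M < y -> Rabs (f y - l) < e.
Proof.
  intros H He. apply is_lim_spec in H. exact (H (mkposreal e He)).
Qed.

Lemma max_arg (g g' : R -> R) :
  (forall x, is_derive g x (g' x)) -> is_lim g m_infty 0 -> is_lim g p_infty 0 ->
  (forall x, 0 < g x -> 0 < g' x) -> forall x, g x <= 0.
Proof.
  intros Hd Hm Hp Hpos x0.
  destruct (Rle_or_lt (g x0) 0) as [H|H]; [exact H|exfalso].
  destruct (lim_m g 0 (g x0) Hm H) as [M1 HM1].
  destruct (lim_p g 0 (g x0) Hp H) as [M2 HM2].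
  set (a := Rmin M1 x0 - 1). set (b := Rmax M2 x0 + 1).
  assert (Ha1 : a < M1) by (unfold a; generalize (Rmin_l M1 x0); lra).
  assert (Ha2 : a < x0) by (unfold a; generalize (Rmin_r M1 x0); lra).
  assert (Hb1 : M2 < b) by (unfold b; generalize (Rmax_l M2 x0); lra).
  assert (Hb2 : x0 < b) by (unfold b; generalize (Rmax_r M2 x0); lra).
  assert (HR : forall c, derivable_pt_lim g c (g' c)) by (intro c; apply is_derive_Reals, Hd).
  destruct (continuity_ab_maj g a b) as [c [Hc1 Hc2]]; [lra| |].
  { intros c _. apply derivable_continuous_pt. exists (g' c). apply HR. }
  assert (Hgc : g x0 <= g c) by (apply Hc1; lra).
  assert (Hga : g a < g x0) by (specialize (HM1 a Ha1); rewrite Rminus_0_r in HM1;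
     apply Rabs_def2 in HM1; lra).
  assert (Hgb : g b < g x0) by (specialize (HM2 b Hb1); rewrite Rminus_0_r in HM2;
     apply Rabs_def2 in HM2; lra).
  assert (Hac : a < c).
  { destruct Hc2 as [Hc2 _]. destruct Hc2 as [Hc2|Hc2]; [exact Hc2| subst c; lra]. }
  assert (Hcb : c < b).
  { destruct Hc2 as [_ Hc2]. destruct Hc2 as [Hc2|Hc2]; [exact Hc2| subst c; lra]. }
  pose (pr := exist (fun l => derivable_pt_lim g c l) (g' c) (HR c) : derivable_pt g c).
  assert (H0 := deriv_maximum g a b c pr Hac Hcb).
  assert (H1 : derive_pt g c pr = 0).
  { apply H0. intros y Hy1 Hy2. apply Hc1; lra. }
  simpl in H1. specialize (Hpos c). lra.
Qed.

Lemma u_bounds (s : R) (u : R -> R) : 0 < s -> monotone u ->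
  is_lim u m_infty s -> is_lim u p_infty (- s) -> forall x, - s <= u x <= s.
Proof.
  intros Hs Hmon Hm Hp x.
  destruct Hmon as [Hinc|Hdec].
  - exfalso.
    destruct (lim_m u s s Hm Hs) as [M1 HM1].
    destruct (lim_p u (-s) s Hp Hs) as [M2 HM2].
    set (a := Rmin M1 M2 - 1). set (b := Rmax M1 M2 + 1).
    assert (a < M1) by (unfold a; generalize (Rmin_l M1 M2); lra).
    assert (M2 < b) by (unfold b; generalize (Rmax_r M1 M2); lra).
    assert (a <= b) by (unfold a, b; generalize (Rmin_l M1 M2) (Rmax_l M1 M2); lra).
    specialize (HM1 a H). specialize (HM2 b H0). specialize (Hinc a b H1).
    apply Rabs_def2 in HM1. apply Rabs_def2 in HM2. lra.
  - split.
    + destruct (Rle_or_lt (-s) (u x)) as [H|H]; [exact H|exfalso].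
      destruct (lim_p u (-s) (-s - u x) Hp ltac:(lra)) as [M HM].
      set (b := Rmax M x + 1).
      assert (M < b) by (unfold b; generalize (Rmax_l M x); lra).
      assert (x <= b) by (unfold b; generalize (Rmax_r M x); lra).
      specialize (HM b H0). specialize (Hdec x b H1). apply Rabs_def2 in HM. lra.
    + destruct (Rle_or_lt (u x) s) as [H|H]; [exact H|exfalso].
      destruct (lim_m u s (u x - s) Hm ltac:(lra)) as [M HM].
      set (a := Rmin M x - 1).
      assert (a < M) by (unfold a; generalize (Rmin_l M x); lra).
      assert (a <= x) by (unfold a; generalize (Rmin_r M x); lra).
      specialize (HM a H0). specialize (Hdec a x H1). apply Rabs_def2 in HM. lra.
Qed.

Lemma alg_up (eps delta s u p q : R): 0<eps -> 0<delta -> 0<s -> 4*delta*s <= eps^2 ->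
  -s<=u<=s -> delta*q = (s-u)*(u+s)/2 + eps*p -> 0 < -eps*p - (s-u)*(u+s) ->
  0 < -eps*q + 2*u*p.
Proof.
  intros He Hd Hs Hk Hu Hq Hg.
  assert (He2 : 0 < eps^2) by (apply pow_lt; lra).
  assert (Hds0 : 0 < delta*s) by (apply Rmult_lt_0_compat; lra).
  set (f := (s-u)*(u+s)) in *. set (g := -eps*p - f) in *.
  assert (Hid : delta*eps*(-eps*q + 2*u*p) - (g*(eps^2 - 2*delta*u) + f*(eps^2/2 - 2*delta*u))
     = -eps^2 * (delta*q - (f/2 + eps*p))) by (unfold g; field).
  rewrite Hq in Hid. replace (delta*q) with (f/2 + eps*p) in Hid by (rewrite Hq; unfold f; field).
  assert (Hf : 0 <= f) by (unfold f; apply Rmult_le_pos; lra).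
  assert (Hdu : delta*u <= delta*s) by (apply Rmult_le_compat_l; lra).
  assert (HA : 0 < eps^2 - 2*delta*u) by lra.
  assert (HB : 0 <= eps^2/2 - 2*delta*u) by lra.
  assert (H1 : 0 < g*(eps^2 - 2*delta*u)) by (apply Rmult_lt_0_compat; lra).
  assert (H2 : 0 <= f*(eps^2/2 - 2*delta*u)) by (apply Rmult_le_pos; lra).
  assert (H3 : 0 < delta*eps*(-eps*q + 2*u*p)) by lra.
  assert (H4 : 0 < delta*eps) by (apply Rmult_lt_0_compat; lra).
  destruct (Rle_or_lt (-eps*q + 2*u*p) 0) as [H|H]; [|exact H].
  assert (delta*eps*(-eps*q + 2*u*p) <= 0) by nra. lra.
Qed.

Lemma alg_low (eps delta s u p q : R): 0<eps -> 0<delta -> 0<s -> 4*delta*s <= eps^2 ->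
  -s<=u<=s -> delta*q = (s-u)*(u+s)/2 + eps*p ->
  0 < (sqrt 2 - 1)*((s-u)*(u+s)) + eps*p ->
  0 < (sqrt 2 - 1)*(-2*u*p) + eps*q.
Proof.
  intros He Hd Hs Hk Hu Hq Hg.
  assert (He2 : 0 < eps^2) by (apply pow_lt; lra).
  assert (Hds0 : 0 < delta*s) by (apply Rmult_lt_0_compat; lra).
  assert (Hr : sqrt 2 * sqrt 2 = 2) by (apply sqrt_sqrt; lra).
  assert (Hr0 : 0 <= sqrt 2) by apply sqrt_pos.
  assert (Hr1 : 1 <= sqrt 2) by nra.
  assert (Hr2 : sqrt 2 <= 2) by nra.
  set (l := sqrt 2 - 1) in *.
  assert (Hl : 1 - 2*l - l*l = 0) by (unfold l; nra).
  assert (Hl0 : 0 <= l) by (unfold l; lra).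
  assert (Hl1 : l <= 1) by (unfold l; lra).
  set (f := (s-u)*(u+s)) in *. set (g := l*f + eps*p) in *.
  assert (Hid : delta*eps*(l*(-2*u*p) + eps*q) - (g*(eps^2 - 2*l*delta*u) + f*(2*l*l*delta*u + eps^2/2 - eps^2*l))
     = eps^2 * (delta*q - (f/2 + eps*p))) by (unfold g; field).
  replace (delta*q) with (f/2 + eps*p) in Hid by (rewrite Hq; unfold f; field).
  assert (Hf : 0 <= f) by (unfold f; apply Rmult_le_pos; lra).
  assert (Hdu : l*(delta*u) <= l*(delta*s)) by (apply Rmult_le_compat_l; [lra|apply Rmult_le_compat_l; lra]).
  assert (Hds : l*(delta*s) <= delta*s) by (rewrite <- (Rmult_1_l (delta*s)) at 2; apply Rmult_le_compat_r; nra).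
  assert (HA : 0 < eps^2 - 2*l*delta*u) by nra.
  assert (HB : 0 <= 2*l*l*delta*u + eps^2/2 - eps^2*l).
  { assert (E : 2*l*l*delta*u + eps^2/2 - eps^2*l
       = 2*(l*l)*(delta*(u+s)) + (l*l)*(eps^2 - 4*delta*s)/2 + eps^2*(1 - 2*l - l*l)/2) by field.
    rewrite E, Hl.
    assert (0 <= l*l) by nra.
    assert (0 <= delta*(u+s)) by (apply Rmult_le_pos; lra).
    assert (0 <= (l*l)*(delta*(u+s))) by (apply Rmult_le_pos; lra).
    assert (0 <= (l*l)*(eps^2 - 4*delta*s)) by (apply Rmult_le_pos; lra).
    lra. }
  assert (H1 : 0 < g*(eps^2 - 2*l*delta*u)) by (apply Rmult_lt_0_compat; lra).
  assert (H2 : 0 <= f*(2*l*l*delta*u + eps^2/2 - eps^2*l)) by (apply Rmult_le_pos; lra).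
  assert (H4 : 0 < delta*eps) by (apply Rmult_lt_0_compat; lra).
  destruct (Rle_or_lt (l*(-2*u*p) + eps*q) 0) as [H|H]; [|exact H].
  assert (delta*eps*(l*(-2*u*p) + eps*q) <= 0) by nra. lra.
Qed.

Lemma lim_poly (u p : R -> R) (x : Rbar) (a b c0 c1 c2 c3 : R) :
  is_lim u x a -> is_lim p x b ->
  is_lim (fun y => c0 + c1 * u y + c2 * (u y * u y) + c3 * p y) x
    (c0 + c1*a + c2*(a*a) + c3*b).
Proof.
  intros Hu Hp.
  apply is_lim_plus'; [apply is_lim_plus'; [apply is_lim_plus'|]|].
  - apply is_lim_const.
  - apply lim_mult_fin; [apply is_lim_const| exact Hu].
  - apply lim_mult_fin; [apply is_lim_const| apply lim_mult_fin; assumption].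
  - apply lim_mult_fin; [apply is_lim_const| exact Hp].
Qed.

Lemma deriv_lim_zero (p q : R -> R) (L : R) : (forall x, is_derive p x (q x)) ->
  is_lim p p_infty 0 -> is_lim q p_infty L -> L = 0.
Proof.
  intros Hd Hp Hq.
  destruct (Req_dec L 0) as [H|H]; [exact H|exfalso].
  assert (He : 0 < Rabs L / 4) by (generalize (Rabs_pos_lt L H); lra).
  destruct (lim_p q L (2 * (Rabs L / 4)) Hq ltac:(lra)) as [M1 HM1].
  destruct (lim_p p 0 (Rabs L / 4) Hp He) as [M2 HM2].
  set (a := Rmax M1 M2 + 1).
  assert (a > M1) by (unfold a; generalize (Rmax_l M1 M2); lra).
  assert (a > M2) by (unfold a; generalize (Rmax_r M1 M2); lra).
  destruct (MVT_cor2 p q a (a+1)) as [c [Hc1 Hc2]]; [lra| |].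
  { intros c _. apply is_derive_Reals, Hd. }
  specialize (HM1 c ltac:(lra)). assert (HA := HM2 a ltac:(lra)).
  assert (HB := HM2 (a+1) ltac:(lra)).
  rewrite Rminus_0_r in HA, HB.
  apply Rabs_def2 in HM1. apply Rabs_def2 in HA. apply Rabs_def2 in HB.
  replace (a + 1 - a) with 1 in Hc1 by ring.
  destruct (Rcase_abs L) as [Hl|Hl];
   [rewrite (Rabs_left L Hl) in *|rewrite (Rabs_right L Hl) in *]; lra.
Qed.

Lemma const_zero (E : R -> R) : (forall x, is_derive E x 0) -> forall x, E x = E 0.
Proof.
  intros Hd x.
  destruct (Rtotal_order x 0) as [H|[H|H]].
  - apply eq_is_derive; [intros t _; apply Hd| exact H].
  - subst x; reflexivity.
  - symmetry. apply eq_is_derive; [intros t _; apply Hd| exact H].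
Qed.
Ltac sd H := repeat match goal with |- _ /\ _ => split | |- True => exact I end;
  first [exact (H 0%nat _) | exact (H 1%nat _) | exact (H 2%nat _)].

Theorem lemma2p3 (eps delta s : R) (u : R -> R) :
  0 < eps -> 0 < delta -> 0 < s -> 4 * delta * s <= eps ^ 2 ->
  smooth u -> monotone u ->
  (forall x : R,
     Derive (fun y => (u y) ^ 2 / 2) x
     = eps * Derive_n u 2 x - delta * Derive_n u 3 x) ->
  is_lim u m_infty s -> is_lim u p_infty (- s) ->
  is_lim (Derive u) m_infty 0 -> is_lim (Derive u) p_infty 0 ->
  forall x : R,
    (sqrt 2 - 1) * ((s - u x) * (u x + s)) <= - eps * Derive u x /\
    - eps * Derive u x <= 1 * ((s - u x) * (u x + s)).
Proof.
  intros He Hd Hs Hk Hsm Hmon Heq Hum Hup Hpm Hpp.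
  assert (Hb := u_bounds s u Hs Hmon Hum Hup).
  assert (Hsq : forall x, Derive (fun y => (u y) ^ 2 / 2) x = u x * Derive u x).
  { intro x. apply (is_derive_unique (fun y => u y ^ 2 / 2) x (u x * Derive u x)). auto_derive.
    - sd Hsm.
    - simpl. change (Derive (fun x0 => u x0) x) with (Derive u x). field. }
  assert (HE : forall x, is_derive (fun y => u y ^ 2 / 2 - eps * Derive u y + delta * Derive_n u 2 y) x 0).
  { intro x.
    assert (H : is_derive (fun y => u y ^ 2 / 2 - eps * Derive u y + delta * Derive_n u 2 y) x
      (u x * Derive u x - eps * Derive_n u 2 x + delta * Derive_n u 3 x)).
    { auto_derive.
      - sd Hsm.
      - simpl. change (Derive (fun x0 => u x0) x) with (Derive u x).
        change (Derive (fun x0 => Derive (fun x1 => u x1) x0) x) with (Derive (Derive u) x).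
        change (Derive (fun x0 : R => Derive u x0) x) with (Derive (Derive u) x).
        set (C := Derive (fun x0 : R => Derive (fun x1 : R => Derive (fun x2 : R => u x2) x1) x0) x).
        field. }
    replace 0 with (u x * Derive u x - eps * Derive_n u 2 x + delta * Derive_n u 3 x); [exact H|].
    rewrite <- Hsq, Heq. ring. }
  set (C := u 0 ^ 2 / 2 - eps * Derive u 0 + delta * Derive_n u 2 0).
  assert (HC : forall x, u x ^ 2 / 2 - eps * Derive u x + delta * Derive_n u 2 x = C).
  { intro x. exact (const_zero _ HE x). }
  assert (Hpq : forall x, is_derive (Derive u) x (Derive_n u 2 x)).
  { intro x. exact (Derive_correct _ x (Hsm 1%nat x)). }
  assert (HqL : is_lim (Derive_n u 2) p_infty ((C - (-s)*(-s)/2 + eps * 0)/delta)).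
  { assert (H := lim_poly u (Derive u) p_infty (-s) 0 (C/delta) 0 (-/(2*delta)) (eps/delta) Hup Hpp).
    replace ((C - (-s)*(-s)/2 + eps * 0)/delta) with
      (C / delta + 0 * - s + - / (2 * delta) * (- s * - s) + eps / delta * 0) by (field; lra).
    eapply is_lim_ext; [|exact H].
    intro y. cbv beta. rewrite <- (HC y). field. lra. }
  assert (HL := deriv_lim_zero _ _ _ Hpq Hpp HqL).
  assert (Hkey : forall x, delta * Derive_n u 2 x = (s - u x) * (u x + s) / 2 + eps * Derive u x).
  { intro x. assert (HC' : C = s * s / 2).
    { assert (E1 : C - s*s/2 = ((C - (-s)*(-s)/2 + eps*0)/delta) * delta) by (field; lra).
      rewrite HL in E1. lra. }
    assert (H2 := HC x). rewrite HC' in H2. lra. }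
  intro x. split.
  - assert (HG := max_arg (fun y => (sqrt 2 - 1) * ((s - u y) * (u y + s)) + eps * Derive u y)
       (fun y => (sqrt 2 - 1) * (-2 * u y * Derive u y) + eps * Derive_n u 2 y)).
    assert (Hx : (sqrt 2 - 1) * ((s - u x) * (u x + s)) + eps * Derive u x <= 0); [|lra].
    apply HG; clear HG.
    + intro y. auto_derive.
      * sd Hsm.
      * simpl. change (Derive (fun x0 => u x0) y) with (Derive u y).
        change (Derive (fun x0 => Derive (fun x1 => u x1) x0) y) with (Derive (Derive u) y).
        change (Derive (fun x0 : R => Derive u x0) y) with (Derive (Derive u) y).
        field.
    + assert (H := lim_poly u (Derive u) m_infty s 0 ((sqrt 2 - 1)*(s*s)) 0 (-(sqrt 2 - 1)) eps Hum Hpm).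
      replace ((sqrt 2 - 1) * (s * s) + 0 * s + - (sqrt 2 - 1) * (s * s) + eps * 0) with 0 in H by ring.
      eapply is_lim_ext; [|exact H]. intro y. cbv beta. ring.
    + assert (H := lim_poly u (Derive u) p_infty (-s) 0 ((sqrt 2 - 1)*(s*s)) 0 (-(sqrt 2 - 1)) eps Hup Hpp).
      replace ((sqrt 2 - 1) * (s * s) + 0 * - s + - (sqrt 2 - 1) * (- s * - s) + eps * 0) with 0 in H by ring.
      eapply is_lim_ext; [|exact H]. intro y. cbv beta. ring.
    + intros y Hy. apply (alg_low eps delta s (u y) (Derive u y) (Derive_n u 2 y)); auto.
  - assert (HG := max_arg (fun y => - eps * Derive u y - (s - u y) * (u y + s))
       (fun y => - eps * Derive_n u 2 y + 2 * u y * Derive u y)).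
    assert (Hx : - eps * Derive u x - (s - u x) * (u x + s) <= 0); [|lra].
    apply HG; clear HG.
    + intro y. auto_derive.
      * sd Hsm.
      * simpl. change (Derive (fun x0 => u x0) y) with (Derive u y).
        change (Derive (fun x0 => Derive (fun x1 => u x1) x0) y) with (Derive (Derive u) y).
        change (Derive (fun x0 : R => Derive u x0) y) with (Derive (Derive u) y).
        field.
    + assert (H := lim_poly u (Derive u) m_infty s 0 (-(s*s)) 0 1 (-eps) Hum Hpm).
      replace (- (s * s) + 0 * s + 1 * (s * s) + - eps * 0) with 0 in H by ring.
      eapply is_lim_ext; [|exact H]. intro y. cbv beta. ring.
    + assert (H := lim_poly u (Derive u) p_infty (-s) 0 (-(s*s)) 0 1 (-eps) Hup Hpp).
      replace (- (s * s) + 0 * - s + 1 * (- s * - s) + - eps * 0) with 0 in H by ring.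
      eapply is_lim_ext; [|exact H]. intro y. cbv beta. ring.
    + intros y Hy. apply (alg_up eps delta s (u y) (Derive u y) (Derive_n u 2 y)); auto.
Qed.
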